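(* Let $n$ be one of the integers for which $\mathbb{Z}[\xi_n]$ has class number one, $\mathcal{M}_n=\mathbb{Z}[\xi_n]$, and $I$ a principal ideal of $\mathcal{M}_n$ of finite index, with $\Lambda\subset\mathbb{R}^{\varphi(n)}$ the lattice representing $\mathcal{M}_n$ and $L$ the sublattice representing $I$. For the Bravais coloring of $\mathcal{M}_n$ determined by $I$, the color symmetry group satisfies $H=T(G)\rtimes D_N$ if and only if $\phi_2(L)=L$.
   Context: Standing assumption: $n\in\{3,4,5,7,8,9,11,12,13,15,16,17,19,20,21,24,25,27,28,32,33,35,36,40,44,45,48,60,84\}$ (the values for which $\mathcal{M}_n=\mathbb{Z}[\xi_n]$, $\xi_n=\exp(2\pi i/n)$, is a principal ideal domain). Let $\varphi$ be Euler's function and $N=n$ if $n$ is even, $N=2n$ if $n$ is odd. Using the $\mathbb{Z}$-basis $\{1,\xi_n,\dots,\xi_n^{\varphi(n)-1}\}$ of $\mathcal{M}_n$, each element is identified with its integer coordinate vector, so $\mathcal{M}_n$ becomes a lattice $\Lambda=\mathbb{Z}^{\varphi(n)}\subset\mathbb{R}^{\varphi(n)}$, and a principal ideal $I$ of index $\ell$ becomes a sublattice $L\subseteq\Lambda$ of index $\ell$. Let $\phi_1$ be the linear map of $\mathbb{R}^{\varphi(n)}$ induced by multiplication by $\exp(2\pi i/N)$ (an $N$-fold rotation) and $\phi_2$ the linear map induced by complex conjugation (a reflection); they generate a group $D_N$, dihedral of order $2N$. Let $T(G)=\{t_y: x\mapsto x+y \mid y\in\Lambda\}$. The symmetry group of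 $\Lambda$ is $G=T(G)\rtimes D_N$. The Bravais coloring determined by $I$ assigns to each element of $\Lambda$ one of $\ell$ colors, two elements getting the same color iff they lie in the same coset of $L$ in $\Lambda$. The color symmetry group $H$ is the set of $g\in G$ that permute the colors, i.e. for every coset $x+L$ the image $g(x+L)$ is again a coset of $L$. *)

(* Defs.v *)
(* the cyclotomic ring Z[xi_n] is modelled inside algC. *)
From HB Require Import structures.
From mathcomp Require Import all_boot all_order all_algebra all_field.
Unset Printing Implicit Defensive.
Import Order.TTheory GRing.Theory Num.Theory.
Local Open Scope ring_scope.

(* The values of n for which Z[xi_n] is a PID (standing assumption). *)
Definition pid_list : seq nat :=
  [:: 3; 4; 5; 7; 8; 9; 11; 12; 13; 15; 16; 17; 19; 20; 21; 24; 25; 27; 28;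
      32; 33; 35; 36; 40; 44; 45; 48; 60; 84]%N.

Definition Nof (n : nat) : nat := if odd n then (2 * n)%N else n.

(* xi_n = exp(2 pi i / n): n.-root (-1) is the n-th root of -1 with minimal
   nonnegative argument, i.e. exp(i pi / n); its square is exp(2 pi i / n). *)
Definition xi (n : nat) : algC := (n.-root (-1)) ^+ 2.

(* exp(2 pi i / N) = (N/2).-root (-1) (N is even). *)
Definition zetaN (n : nat) : algC := ((Nof n)./2.-root (-1)).

Definition in_Mn (n : nat) (x : algC) : Prop :=
  exists p : {poly int}, x = (map_poly intr p).[xi n].

Definition Lam (n : nat) := 'rV[int]_(totient n).

Definition coord (n : nat) (v : Lam n) : algC :=
  \sum_(i < totient n) (v 0 i)%:~R * xi n ^+ i.

Definition in_ideal (n : nat) (a x : algC) : Prop :=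
  exists m, in_Mn n m /\ x = a * m.

Definition inL (n : nat) (a : algC) (v : Lam n) : Prop := in_ideal n a (coord n v).

Definition finite_index (n : nat) (a : algC) : Prop :=
  exists s : seq (Lam n), forall v : Lam n, exists2 w, w \in s & inL n a (v - w).

Definition induced_by (n : nat) (f : algC -> algC) (g : Lam n -> Lam n) : Prop :=
  forall v, coord n (g v) = f (coord n v).

Definition is_phi1 (n : nat) (g : Lam n -> Lam n) : Prop :=
  induced_by n (fun x => zetaN n * x) g.

Definition is_phi2 (n : nat) (g : Lam n -> Lam n) : Prop :=
  induced_by n (fun x => x^*) g.

(* D_N: the group generated by phi_1 and phi_2 (both of finite order, so the
   generated monoid is the generated group). *)
Inductive inDN (n : nat) : (Lam n -> Lam n) -> Prop :=
  | DN_id : inDN n (fun v => v)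
  | DN_phi1 (f g : Lam n -> Lam n) : is_phi1 n f -> inDN n g -> inDN n (f \o g)
  | DN_phi2 (f g : Lam n -> Lam n) : is_phi2 n f -> inDN n g -> inDN n (f \o g).

Definition inG (n : nat) (g : Lam n -> Lam n) : Prop :=
  exists (y : Lam n) (d : Lam n -> Lam n), inDN n d /\ forall v, g v = d v + y.

Definition permutes_colors (n : nat) (a : algC) (g : Lam n -> Lam n) : Prop :=
  forall x : Lam n, exists x' : Lam n, forall w : Lam n,
    (exists l, inL n a l /\ w = g (x + l)) <-> (exists l, inL n a l /\ w = x' + l).

Definition inH (n : nat) (a : algC) (g : Lam n -> Lam n) : Prop :=
  inG n g /\ permutes_colors n a g.

(* Main.v *)
Require Import Defs.
From HB Require Import structures.
From mathcomp Require Import all_boot all_order all_algebra all_field.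
From mathcomp Require Import ring lra zify.
Import Order.TTheory GRing.Theory Num.Theory.
Local Open Scope ring_scope.


Lemma K1 (a b c s : algR) : a^+2 + b^+2 = 1 -> c^+2 + s^+2 = 1 -> 0 < s ->
  a*c - b*s <= a -> a*c + b*s <= a -> a <= c -> False.
Proof.
move=> hab hcs hs h1 h2 h3.
have hc1 : c < 1 by nra.
have ha0 : 0 <= a by nra.
have hb2 : s^+2 <= b^+2 by nra.
have hbs : s^+2 <= a * (1 - c).
  case: (lerP 0 b) => hb.
  - have : s <= b by nra. nra.
  - have : s <= - b by nra. nra.
nra.
Qed.

Lemma K2 (a b c s : algR) : a^+2 + b^+2 = 1 -> c^+2 + s^+2 = 1 -> 0 < s ->
  a*c - b*s <= a -> a*c + b*s <= a -> a*c - b*s <= c -> a*c + b*s <= c ->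
  a = 1 /\ b = 0.
Proof.
move=> hab hcs hs h1 h2 h3 h4.
have hc1 : c < 1 by nra.
have ha0 : 0 <= a by nra.
suff hb : b = 0.
  split=> //; subst b; nra.
wlog hb : b hab h1 h2 h3 h4 / 0 <= b.
  move=> W; case: (lerP 0 b) => hb; first exact: W.
  have := W (-b); rewrite sqrrN => H.
  have : -b = 0 by apply: H => //; nra.
  by move/eqP; rewrite oppr_eq0 => /eqP.
case: (lerP b 0) => hb0; first by apply/le_anti; rewrite hb0 hb.
exfalso.
case: (lerP c 0) => hc0; first nra.
have ha1 : a <= 1 by nra.
have e1 : b * s <= a * (1 - c) by nra.
have e2 : b * s <= c * (1 - a) by nra.
have f0 : b * s * (1 + a) <= c * b ^+ 2 by nra.
have f1 : s * (1 + a) <= c * b.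
  have : b * (s * (1 + a)) <= b * (c * b) by rewrite mulrA (mulrC b s) -(mulrA s) mulrC mulrA; nra.
  by rewrite ler_pM2l.
have f2 : c * b * s <= a * c * (1 - c) by nra.
have f3 : s ^+ 2 * (1 + a) <= a * c * (1 - c) by nra.
have f4 : (1 - c) * ((1 + c) * (1 + a)) <= (1 - c) * (a * c) by nra.
rewrite ler_pM2l in f4; last by rewrite subr_gt0.
nra.
Qed.

Lemma leR (x y : algR) : (x <= y) = (algRval x <= algRval y). Proof. by []. Qed.
Lemma ltR (x y : algR) : (x < y) = (algRval x < algRval y). Proof. by []. Qed.
Definition RR (u : algC) : algR := in_algR (Creal_Re u).
Definition II (u : algC) : algR := in_algR (Creal_Im u).
Lemma RRE u : algRval (RR u) = 'Re u. Proof. by []. Qed.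
Lemma IIE u : algRval (II u) = 'Im u. Proof. by []. Qed.

Lemma RI2 (u : algC) : `|u| = 1 -> RR u ^+ 2 + II u ^+ 2 = 1.
Proof.
move=> h; apply: val_inj; rewrite /= -!expr2 -normC2_Re_Im h.
by rewrite expr1n.
Qed.

Lemma normX1 (u : algC) k : (0 < k)%N -> `|u ^+ k| = 1 -> `|u| = 1.
Proof.
move=> hk; rewrite normrX => /eqP; rewrite pexpr_eq1 //; by move/eqP.
Qed.

Lemma expr_modn (y : algC) m i : y ^+ m = 1 -> y ^+ (i %% m) = y ^+ i.
Proof. by move=> h; rewrite {2}(divn_eq i m) exprD mulnC exprM h expr1n mul1r. Qed.

Section Root.
Variable n : nat.
Hypothesis n_gt1 : (1 < n)%N.
Let n_gt0 : (0 < n)%N. Proof. exact: ltnW. Qed.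
Let y := n.-root (-1 : algC).

Let yn : y ^+ n = -1. Proof. exact: rootCK. Qed.
Let y2n : y ^+ (2 * n) = 1. Proof. by rewrite mulnC exprM yn sqrrN expr1n. Qed.
Let ny : `|y| = 1. Proof. by apply: (@normX1 _ n n_gt0); rewrite yn normrN1. Qed.

Let ymax z : z ^+ n = -1 -> 'Re z <= 'Re y.
Proof.
move=> hz; case/orP: (real_leVge (Creal_Im z) (real0 _)) => him.
- rewrite -(Re_conj z); apply: rootC_Re_max => //.
  + by rewrite -rmorphXn hz rmorphN1.
  + by rewrite Im_conj oppr_ge0.
- exact: rootC_Re_max.
Qed.

Lemma K0 (a b c : algR) : a^+2 + b^+2 = 1 -> c^+2 = 1 -> a <= c ->
  c = 1 \/ (a = -1 /\ b = 0).
Proof.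
move=> h1 h2 h3.
have : (c - 1) * (c + 1) = 0 by rewrite -subr_sqr h2 expr1n subrr.
move/eqP; rewrite mulf_eq0 subr_eq0 addr_eq0 => /orP[/eqP -> | /eqP hc]; first by left.
right; subst c.
have ha : a = -1 by apply/le_anti; rewrite h3 /=; nra.
subst a; split => //; nra.
Qed.

Lemma rect_eq (u : algC) a b : 'Re u = a -> 'Im u = b -> u = a + 'i * b.
Proof. by move=> <- <-; exact: Crect. Qed.

Let Imy_gt0 : 0 < 'Im y.
Proof.
have hs : 0 <= 'Im y by exact: Im_rootC_ge0.
rewrite lt_def hs andbT; apply/negP => /eqP hs0.
have n2_gt0 : (0 < 2 * n)%N by rewrite muln_gt0.
have [p pp] := C_prim_root_exists n2_gt0.
have pn : p ^+ n = -1.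
  have : (p ^+ n) ^+ 2 = 1 by rewrite -exprM mulnC prim_expr_order.
  move/eqP; rewrite sqrf_eq1 => /orP[| /eqP //].
  rewrite -(prim_order_dvd pp) => hd; exfalso.
  have := dvdn_leq n_gt0 hd; rewrite -{2}(mul1n n) leq_pmul2r //.
have np : `|p| = 1 by apply: (@normX1 _ n n_gt0); rewrite pn normrN1.
have h1 := RI2 _ np.
have h2 : RR y ^+ 2 = 1.
  have := RI2 _ ny; have -> : II y = 0 by apply: val_inj; rewrite /= hs0.
  by rewrite expr0n addr0.
have h3 : RR p <= RR y by rewrite leR; exact: ymax.
case: (K0 _ _ _ h1 h2 h3) => [hc | [ha hb]].
- have y1 : y = 1.
    rewrite (rect_eq y 1 0) ?mulr0 ?addr0 //.
    by have := congr1 algRval hc.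
  move: yn; rewrite y1 expr1n => /eqP; rewrite -subr_eq0 opprK.
  by rewrite (pnatr_eq0 _ 2).
- have p1 : p = -1.
    rewrite (rect_eq p (-1) 0) ?mulr0 ?addr0 //.
    + by have := congr1 algRval ha.
    + by have := congr1 algRval hb.
  have := prim_order_dvd pp 2; rewrite p1 sqrrN expr1n eqxx.
  move=> hd; have := dvdn_leq (isT : (0 < 2)%N) hd.
  move: n_gt1; lia.
Qed.

Lemma RRM (u v : algC) : RR (u * v) = RR u * RR v - II u * II v.
Proof. by apply: val_inj; rewrite /= ReM. Qed.
Lemma RRJ (u : algC) : RR (u^*) = RR u.
Proof. by apply: val_inj; rewrite /= Re_conj. Qed.
Lemma IIJ (u : algC) : II (u^*) = - II u.
Proof. by apply: val_inj; rewrite /= Im_conj. Qed.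

Lemma root_pow x : x ^+ (2 * n) = 1 -> exists k, x = y ^+ k.
Proof.
move=> hx.
set m := (2 * n)%N.
have m_gt0 : (0 < m)%N by rewrite muln_gt0.
pose F (k : 'I_m) : algR := RR (x * y ^+ k).
case: (@arg_maxP _ _ 'I_m (Ordinal m_gt0) predT F isT) => k _ kmax.
set u := x * y ^+ k.
have hu2n : u ^+ m = 1 by rewrite exprMn hx exprAC y2n expr1n mulr1.
have nu : `|u| = 1 by apply: (@normX1 _ m m_gt0); rewrite hu2n normr1.
have hw : y ^+ m.-1 = y^*.
  have y0 : y != 0 by rewrite -normr_eq0 ny oner_eq0.
  apply: (mulfI y0); rewrite -exprS prednK // y2n.
  by rewrite -normCK ny expr1n.
have hmod j : y ^+ (j %% m) = y ^+ j by apply: expr_modn.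
have h1 : RR (u * y) <= RR u.
  have := kmax (Ordinal (ltn_pmod k.+1 m_gt0)) isT.
  by rewrite /F /= hmod exprS (mulrC y) mulrA.
have h2 : RR (u * y^*) <= RR u.
  have := kmax (Ordinal (ltn_pmod (k + m.-1) m_gt0)) isT.
  by rewrite /F /= hmod exprD hw mulrA.
rewrite RRM in h1; rewrite RRM RRJ IIJ mulrN opprK in h2.
have hab := RI2 _ nu.
have hcs := RI2 _ ny.
have hs : 0 < II y by rewrite ltR.
have hun : u ^+ n = 1 \/ u ^+ n = -1.
  have : (u ^+ n) ^+ 2 = 1 by rewrite -exprM mulnC.
  by move/eqP; rewrite sqrf_eq1 => /orP[/eqP ->|/eqP ->]; [left|right].
case: hun => hun; last first.
  have h3 : RR u <= RR y by rewrite leR; exact: ymax.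
  by case: (K1 _ _ _ _ hab hcs hs h1 h2 h3).
have h3 : RR (u * y) <= RR y by rewrite leR; apply: ymax; rewrite exprMn hun yn mul1r.
have h4 : RR (u * y^*) <= RR y.
  rewrite leR; apply: ymax; rewrite exprMn hun -rmorphXn yn mul1r.
  exact: rmorphN1.
rewrite RRM in h3; rewrite RRM RRJ IIJ mulrN opprK in h4.
case: (K2 _ _ _ _ hab hcs hs h1 h2 h3 h4) => ha hb.
have u1 : u = 1.
  rewrite (rect_eq u 1 0) ?mulr0 ?addr0 //.
  + by have := congr1 algRval ha.
  + by have := congr1 algRval hb.
exists (m - k)%N.
have e : y ^+ k * y ^+ (m - k) = 1 by rewrite -exprD subnKC ?y2n // ltnW.
by rewrite -[x]mulr1 -e mulrA -/u u1 mul1r.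
Qed.

Lemma y_prim : (2 * n).-primitive_root y.
Proof.
have m_gt0 : (0 < 2 * n)%N by rewrite muln_gt0.
have [p pp] := C_prim_root_exists m_gt0.
have [k pk] := root_pow _ (prim_expr_order pp).
have [j yj] := prim_rootP pp y2n.
rewrite yj prim_root_exp_coprime //.
have : p ^+ 1 == p ^+ (j * k) by rewrite expr1 exprM -yj -pk.
rewrite (eq_prim_root_expr pp) => /eqP h.
have : coprime (j * k) (2 * n).
  rewrite -coprime_modl -h modn_small ?coprime1n //.
  by move: n_gt1; lia.
by rewrite coprimeMl => /andP[].
Qed.

Lemma xi_prim : n.-primitive_root (y ^+ 2).
Proof.
have := exp_prim_root y_prim 2.
by rewrite gcdnMr mulKn.
Qed.
End Root.

Lemma coordD n u v : Defs.coord n (u + v) = Defs.coord n u + Defs.coord n v.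
Proof.
rewrite /Defs.coord -big_split; apply: eq_bigr => i _.
by rewrite mxE rmorphD mulrDl.
Qed.
Lemma coordN n u : Defs.coord n (- u) = - Defs.coord n u.
Proof.
rewrite /Defs.coord -sumrN; apply: eq_bigr => i _.
by rewrite mxE rmorphN mulNr.
Qed.
Lemma coordB n u v : Defs.coord n (u - v) = Defs.coord n u - Defs.coord n v.
Proof. by rewrite coordD coordN. Qed.
Lemma coord0 n : Defs.coord n 0 = 0.
Proof. by rewrite -(subrr (0 : Lam n)) coordB subrr. Qed.

Lemma coord_eq0 n (v : Lam n) : (1 < n)%N -> Defs.coord n v = 0 -> v = 0.
Proof.
move=> n1 hv.
have px := xi_prim _ n1.
pose q : {poly rat} := \sum_(i < totient n) ((v 0 i)%:~R : rat) *: 'X^i.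
have hq : root (map_poly ratr q) (xi n).
  rewrite /root rmorph_sum horner_sum; apply/eqP; rewrite -[RHS]hv /Defs.coord.
  apply: eq_bigr => i _.
  by rewrite /= map_polyZ map_polyXn hornerZ hornerXn rmorph_int.
have [p [Dp mp] dvp] := minCpolyP (xi n).
have hpq : (p %| q)%R by rewrite -dvp.
have szp : size p = (totient n).+1.
  have := size_cyclotomic (xi n) n.
  by rewrite -(minCpoly_cyclotomic px) Dp size_map_poly.
have q0 : q = 0.
  apply/eqP; apply: contraT => qn0.
  have := dvdp_leq qn0 hpq; rewrite szp => h.
  have szq : (size q <= totient n)%N.
    apply: leq_trans (size_sum _ _ _) _.
    apply/bigmax_leqP => i _.
    apply: leq_trans (size_scale_leq _ _) _; rewrite size_polyXn; exact: ltn_ord.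
  by have := leq_trans h szq; rewrite ltnn.
apply/rowP => j; rewrite !mxE.
have := congr1 (fun r : {poly rat} => r`_j) q0.
rewrite coef0 coef_sumMXn /= (big_pred1 j) => [/eqP|i]; last by rewrite /= -val_eqE.
by rewrite intr_eq0 => /eqP.
Qed.

Lemma coord_inj n (u v : Lam n) : (1 < n)%N -> Defs.coord n u = Defs.coord n v -> u = v.
Proof.
move=> n1 h; apply/eqP; rewrite -subr_eq0; apply/eqP; apply: (coord_eq0 _ _ n1).
by rewrite coordB h subrr.
Qed.

Lemma Mn_mul n x z : in_Mn n x -> in_Mn n z -> in_Mn n (x * z).
Proof. by move=> [p ->] [q ->]; exists (p * q); rewrite rmorphM hornerM. Qed.
Lemma Mn_opp n x : in_Mn n x -> in_Mn n (- x).
Proof. by move=> [p ->]; exists (- p); rewrite rmorphN hornerN. Qed.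
Lemma Mn_add n x z : in_Mn n x -> in_Mn n z -> in_Mn n (x + z).
Proof. by move=> [p ->] [q ->]; exists (p + q); rewrite rmorphD hornerD. Qed.
Lemma Mn0 n : in_Mn n 0.
Proof. by exists 0; rewrite rmorph0 horner0. Qed.
Lemma Mn_xiX n k : in_Mn n (xi n ^+ k).
Proof. by exists 'X^k; rewrite map_polyXn hornerXn. Qed.

Lemma Nof_half n : Nof n = ((Nof n)./2 * 2)%N.
Proof.
rewrite /Nof; case: ifP => ho.
- by rewrite mul2n doubleK muln2.
- by have := odd_double_half n; rewrite ho add0n -muln2 => ->.
Qed.

Lemma zeta_N n : (0 < n)%N -> zetaN n ^+ Nof n = 1.
Proof.
move=> n0.
have h2 : (0 < (Nof n)./2)%N.
  rewrite /Nof; case: ifP => ho; first by rewrite mul2n doubleK.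
  by move: n0 ho; case: n => [|[|m]] //.
by rewrite Nof_half exprM /zetaN rootCK // sqrrN expr1n.
Qed.

Lemma zeta_Mn n : (1 < n)%N -> in_Mn n (zetaN n).
Proof.
move=> n1.
have px := xi_prim _ n1.
rewrite /zetaN /Nof; case: ifP => ho.
- rewrite mul2n doubleK.
  have : (- n.-root (-1 : algC)) ^+ n = 1.
    rewrite exprNn rootCK ?(ltnW n1) // -signr_odd ho expr1 mulN1r opprK //.
  case/(prim_rootP px) => i hi.
  by rewrite -[X in in_Mn _ X]opprK hi; apply/Mn_opp/Mn_xiX.
- have h2 : (0 < n./2)%N by rewrite half_gt0.
  have : (n./2.-root (-1 : algC)) ^+ n = 1.
    have := odd_double_half n; rewrite ho add0n -muln2 => e.
    by rewrite -[X in _ ^+ X = _]e exprM rootCK // sqrrN expr1n.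
  case/(prim_rootP px) => i ->; exact: Mn_xiX.
Qed.

Lemma inL0 n a : inL n a 0.
Proof. by exists 0; split; [exact: Mn0 | rewrite coord0 mulr0]. Qed.
Lemma inLD n a u v : inL n a u -> inL n a v -> inL n a (u + v).
Proof.
move=> [m1 [h1 e1]] [m2 [h2 e2]]; exists (m1 + m2); split; first exact: Mn_add.
by rewrite coordD e1 e2 mulrDr.
Qed.
Lemma inLN n a u : inL n a u -> inL n a (- u).
Proof.
move=> [m1 [h1 e1]]; exists (- m1); split; first exact: Mn_opp.
by rewrite coordN e1 mulrN.
Qed.
Lemma inL_coord n a u v : Defs.coord n u = Defs.coord n v -> inL n a u -> inL n a v.
Proof. by rewrite /inL => ->. Qed.

Definition good n a (d : Lam n -> Lam n) :=
  [/\ (forall u v, d (u + v) = d u + d v),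
      (forall l, inL n a l -> inL n a (d l)) &
      (forall l, inL n a l -> exists l', inL n a l' /\ d l' = l)].

Lemma good_id n a : good n a (fun v => v).
Proof. by split=> // l hl; exists l. Qed.

Lemma good_comp n a f g : good n a f -> good n a g -> good n a (f \o g).
Proof.
move=> [f1 f2 f3] [g1 g2 g3]; split=> /=.
- by move=> u v; rewrite g1 f1.
- by move=> l hl; apply/f2/g2.
- move=> l hl; have [l1 [hl1 e1]] := f3 l hl; have [l2 [hl2 e2]] := g3 l1 hl1.
  by exists l2; rewrite e2.
Qed.

Lemma phi1_good n a f : (1 < n)%N -> is_phi1 n f -> good n a f.
Proof.
move=> n1 hf.
have fL l : inL n a l -> inL n a (f l).
  move=> [m [hm e]]; exists (zetaN n * m); split.
    by apply: Mn_mul => //; exact: zeta_Mn.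
  by rewrite hf e mulrCA.
have hit k v : Defs.coord n (iter k f v) = zetaN n ^+ k * Defs.coord n v.
  elim: k => [|k IH]; first by rewrite mul1r.
  by rewrite iterS hf IH exprS mulrA.
have itL k l : inL n a l -> inL n a (iter k f l).
  by move=> hl; elim: k => [|k IH] //; rewrite iterS; apply: fL.
split=> //.
- move=> u v; apply: coord_inj => //.
  by rewrite coordD !hf coordD mulrDr.
- move=> l hl; exists (iter (Nof n).-1 f l); split; first exact: itL.
  have N0 : (0 < Nof n)%N.
    by rewrite /Nof; case: ifP => _; rewrite ?muln_gt0 /= ltnW.
  rewrite -iterS prednK //; apply: coord_inj => //.
  by rewrite hit zeta_N ?mul1r // ltnW.
Qed.

Lemma phi2_good n a f : (1 < n)%N -> is_phi2 n f ->
  (forall w, (exists l, inL n a l /\ w = f l) <-> inL n a w) -> good n a f.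
Proof.
move=> n1 hf H; split.
- move=> u v; apply: coord_inj => //.
  by rewrite coordD !hf coordD rmorphD.
- by move=> l hl; apply/H; exists l.
- move=> l /H [l' [hl' e]]; by exists l'.
Qed.

Lemma DN_good n a d : (1 < n)%N ->
  (forall f : Lam n -> Lam n, is_phi2 n f ->
     forall w : Lam n, (exists l, inL n a l /\ w = f l) <-> inL n a w) ->
  inDN n d -> good n a d.
Proof.
move=> n1 H; elim => [|f g hf _ IH|f g hf _ IH].
- exact: good_id.
- by apply: good_comp IH; apply: phi1_good.
- by apply: good_comp IH; apply: phi2_good => //; apply: H.
Qed.

Theorem theorem3p1p2 (n : nat) (hn : n \in pid_list) (a : algC)
  (ha : in_Mn n a) (hfin : finite_index n a) :
  (forall g : Lam n -> Lam n, inH n a g <-> inG n g) <->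
  (forall f : Lam n -> Lam n, is_phi2 n f ->
     forall w : Lam n, (exists l, inL n a l /\ w = f l) <-> inL n a w).
Proof.
have n1 : (1 < n)%N.
  have : all (fun m => 1 < m)%N pid_list by [].
  by move/allP/(_ n hn).
split.
- move=> HG f hf w.
  have inGf : inG n f.
    exists 0, (f \o (fun v => v)); split; first exact: DN_phi2 hf (DN_id n).
    by move=> v; rewrite addr0.
  have [_ pc] := (HG f).2 inGf.
  have [x' hx'] := pc 0.
  have [l1 [hl1 e1]] := (hx' (f (0 + 0))).1 (ex_intro _ 0 (conj (inL0 n a) erefl)).
  have hx : inL n a x'.
    apply: (inL_coord _ _ (- l1)); last exact: inLN.
    have : Defs.coord n (f (0 + 0)) = 0 by rewrite hf addr0 coord0 rmorph0.
    rewrite e1 coordD => /eqP; rewrite addr_eq0 => /eqP ->.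
    by rewrite coordN.
  split.
  + case=> l [hl ->].
    have hfl : f l = f (0 + l) by rewrite add0r.
    have [l2 [hl2 ->]] := (hx' (f l)).1 (ex_intro _ l (conj hl hfl)).
    exact: inLD.
  + move=> hw.
    have hwx : w = x' + (w - x') by rewrite addrC subrK.
    have [l [hl e]] := (hx' w).2 (ex_intro _ (w - x')
       (conj (inLD _ _ _ _ hw (inLN _ _ _ hx)) hwx)).
    by exists l; rewrite e add0r.
- move=> H g; split; first by case.
  move=> hG; split=> //.
  have [y [d [hd hg]]] := hG.
  have [d1 d2 d3] := DN_good _ _ _ n1 H hd.
  move=> x; exists (d x + y) => w; split.
  + case=> l [hl ->]; exists (d l); split; first exact: d2.
    by rewrite hg d1 addrAC.
  + case=> l [hl ->]; have [l' [hl' e]] := d3 l hl.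
    by exists l'; rewrite hg d1 e addrAC.
Qed.
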